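(* For every integer $r\geq 2$, $$\sum_{M\geq1}g_r(M)z^M=\frac{z}{1-2z}\cdot\frac{(1-z)^{r-1}-z^{r-1}}{(1-z)^{r-1}-z^r}.$$
   Context: The perimeter of a nonempty partition $\lambda$ with largest part $\lambda_1$ and $\ell(\lambda)$ parts is $\lambda_1+\ell(\lambda)-1$. For $r\geq2$, $g_r(M)$ is the number of partitions with perimeter $M$ none of whose parts is divisible by $r$. *)

(* Defs.v *)
From mathcomp Require Import all_boot all_order all_algebra.
Set Implicit Arguments. Unset Strict Implicit. Unset Printing Implicit Defensive.
Import GRing.Theory.

Definition is_partition (s : seq nat) : bool :=
  sorted geq s && all (fun x => 0 < x) s.

Definition perimeter (s : seq nat) : nat := head 0 s + size s - 1.

Definition gr_pred (r M : nat) (s : seq nat) : bool :=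
  [&& is_partition s, s != [::], perimeter s == M
    & all (fun x => ~~ (r %| x)) s].

(* g_r(M): number of partitions of perimeter M none of whose parts is
   divisible by r.  Every such partition has at most M parts, each at
   most M, so it is counted exactly once as a tuple of length L <= M
   with entries in 'I_(M+1). *)
Definition g (r M : nat) : nat :=
  \sum_(L < M.+1) #|[set t : L.-tuple 'I_M.+1 | gr_pred r M (map val t)]|.

Definition gser (r N : nat) : {poly int} :=
  \sum_(1 <= M < N.+1) (g r M)%:R *: 'X^M.

(* Main.v *)
Require Import Defs.
From mathcomp Require Import all_boot all_order all_algebra.
From mathcomp Require Import zify ring lra.
Set Implicit Arguments. Unset Strict Implicit. Unset Printing Implicit Defensive.

Fixpoint Wc (r n x : nat) : nat :=
  match n with
  | 0 => (x == 0 : nat)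
  | n'.+1 => (if x is x'.+1 then Wc r n' x' else 0) + (~~ (r %| x)) * Wc r n' x
  end.

Lemma Wc_gt r n x : n < x -> Wc r n x = 0.
Proof.
elim: n x => [|n IH] [|x] //= H.
rewrite IH // IH ?muln0 //; lia.
Qed.

Lemma Wc_diag r n : Wc r n n = 1.
Proof. by elim: n => //= n ->; rewrite Wc_gt ?muln0. Qed.

Fixpoint Nf (r L a : nat) : nat :=
  match L with
  | 0 => 1
  | L'.+1 => \sum_(0 <= x < a.+1) ((0 < x) && ~~ (r %| x)) * Nf r L' x
  end.

Lemma Nf_W r L a : Nf r L a = Wc r (L + a) a.
Proof.
elim: L a => [|L IHL] a; first by rewrite Wc_diag.
elim: a => [|a IHa].
  by rewrite /= big_nat1 addn0 /= dvdn0.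
rewrite /= big_nat_recr //= -/(Nf r L.+1 a) IHa IHL.
by rewrite !addnS !addSn.
Qed.

Fixpoint qseq (r a : nat) (s : seq nat) : bool :=
  if s is x :: s' then [&& 0 < x, x <= a, ~~ (r %| x) & qseq r x s'] else true.

Lemma qseqE r a s : qseq r a s = path geq a s && all (fun y => (0 < y) && ~~ (r %| y)) s.
Proof.
elim: s a => [|x s IH] a //=.
rewrite IH; set P := all _ s; set Q := path geq x s.
by case: (0 < x); case: (x <= a); case: (r %| x); case: P; case: Q.
Qed.

Lemma gr_predE r M x s :
  gr_pred r M (x :: s) = [&& x + size s == M, 0 < x, ~~ (r %| x) & qseq r x s].
Proof.
rewrite /gr_pred /is_partition /perimeter /= qseqE.
have -> : x + (size s).+1 - 1 = x + size s by lia.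
have -> : all (fun y => (0 < y) && ~~ (r %| y)) s = all (fun y => 0 < y) s && all (fun y => ~~ (r %| y)) s.
  by elim: s {M} => //= y s ->; case: (0 < y); case: (r %| y); case: all; case: all.
set P1 := path _ x s; set P2 := all _ s; set P3 := all _ s.
by case: (0 < x); case: (r %| x); case: P1; case: P2; case: P3; case: (_ == _).
Qed.

Lemma sum_tupleS K L (F : seq nat -> nat) :
  \sum_(t : L.+1.-tuple 'I_K) F (map val t) =
  \sum_(x : 'I_K) \sum_(t : L.-tuple 'I_K) F (val x :: map val t).
Proof.
rewrite pair_big /=.
rewrite (reindex (fun p : 'I_K * L.-tuple 'I_K => [tuple of p.1 :: p.2])) /=.
  by apply: eq_bigr => -[x t] _.
exists (fun t : L.+1.-tuple 'I_K => (thead t, [tuple of behead t])).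
  by move=> [x t] _ /=; congr pair; apply: val_inj.
move=> t _ /=; by rewrite -tuple_eta.
Qed.

Lemma Ncnt_Nf r K L a : a < K ->
  \sum_(t : L.-tuple 'I_K) qseq r a (map val t) = Nf r L a.
Proof.
elim: L a => [|L IH] a aK.
  rewrite (eq_bigr (fun _ => 1)); last by move=> t _; rewrite tuple0.
  by rewrite sum_nat_const card_tuple expn0 muln1.
rewrite (@sum_tupleS K L (fun s => nat_of_bool (qseq r a s))) /=.
rewrite (eq_bigr (fun x : 'I_K => [&& 0 < x, x <= a & ~~ (r %| x)] * Nf r L x)); last first.
  move=> x _; have := IH x (ltn_ord x).
  case: (0 < val x); case: (val x <= a); case: (r %| val x) => /= H.
  all: try (by rewrite mul0n big1).
  by rewrite mul1n.
rewrite -(big_mkord xpredT (fun x => [&& 0 < x, x <= a & ~~ (r %| x)] * Nf r L x)).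
rewrite (big_cat_nat (leq0n a.+1) aK) /=.
rewrite [X in _ + X = _]big1_seq ?addn0; last first.
  move=> i; rewrite mem_index_iota => /andP[_ /andP[Hi _]].
  have -> : (i <= a) = false by lia.
  by rewrite andbF.
apply: eq_big_nat => i /andP[_ Hi].
have -> : (i <= a) = true by lia.
by [].
Qed.

Lemma card_setE (T : finType) (P : pred T) : #|[set x | P x]| = \sum_(x : T) P x.
Proof.
rewrite cardsE -sum1_card big_mkcond /=.
by apply: eq_bigr => x _; rewrite unfold_in; case: (P x).
Qed.

Lemma sum_pick n k (f : nat -> nat) : k < n ->
  \sum_(0 <= x < n) (x == k) * f x = f k.
Proof.
move=> kn; rewrite big_mkord (bigD1 (Ordinal kn)) //= eqxx mul1n big1 ?addn0 //.
move=> i Hi; have -> : (val i == k) = false; last by [].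
apply/negbTE; apply: contra Hi => /eqP Hik; apply/eqP; exact: val_inj.
Qed.

Lemma g_formula r M : g r M = \sum_(0 <= x < M.+1) (~~ (r %| x)) * Wc r M x.
Proof.
rewrite /g.
rewrite (eq_bigr (fun L : 'I_M.+1 => \sum_(t : L.-tuple 'I_M.+1) gr_pred r M (map val t)));
  last by move=> L _; rewrite card_setE.
rewrite -(big_mkord xpredT (fun L => \sum_(t : L.-tuple 'I_M.+1) gr_pred r M (map val t))).
rewrite big_nat_recl //.
rewrite big1 ?add0n; last by move=> t _; rewrite tuple0.
rewrite [RHS]big_nat_rev /= [RHS]big_nat_recr //= !add0n subnn dvdn0 mul0n addn0.
apply: eq_big_nat => L /andP[_ HL].
rewrite (@sum_tupleS M.+1 L (fun s => nat_of_bool (gr_pred r M s))).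
rewrite (eq_bigr (fun x : 'I_M.+1 => [&& val x + L == M, 0 < val x & ~~ (r %| val x)] * Nf r L x));
  last first.
  move=> x _; rewrite -(@Ncnt_Nf r M.+1 L x (ltn_ord x)).
  rewrite (eq_bigr (fun t : L.-tuple 'I_M.+1 => nat_of_bool ([&& val x + L == M, 0 < val x & ~~ (r %| val x)] && qseq r x (map val t)))); last first.
    by move=> t _; rewrite gr_predE size_map size_tuple !andbA.
  case: [&& _, _ & _] => /=; first by rewrite mul1n.
  by rewrite mul0n big1.
rewrite subSS.
rewrite -(big_mkord xpredT (fun i => [&& i + L == M, 0 < i & ~~ (r %| i)] * Nf r L i)).
rewrite (eq_big_nat _ _ (F2 := fun i => (i == M - L) * ((~~ (r %| i)) * Nf r L i))); last first.
  move=> i _; case: (eqVneq i (M - L)) => [->|Hne].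
    have -> : M - L + L == M by apply/eqP; lia.
    have -> : 0 < M - L by lia.
    by rewrite /= mul1n.
  have -> : i + L == M = false by apply/negbTE; apply/eqP => H; apply/eqP: Hne; lia.
  by [].
rewrite sum_pick; last by lia.
by rewrite Nf_W subnKC // ltnW.
Qed.

Lemma modS_eq r y j : 0 < r -> j < r ->
  (y.+1 %% r == j) = (y %% r == (if j == 0 then r.-1 else j.-1)).
Proof.
case: r => [|r] // _ Hj.
have hm : y %% r.+1 < r.+1 by rewrite ltn_pmod.
have e : y.+1 %% r.+1 = (y %% r.+1).+1 %% r.+1.
  by rewrite {1}(divn_eq y r.+1) -addnS modnMDl.
move: e hm; set m := y %% r.+1 => e hm.
rewrite e.
case: (ltngtP m.+1 r.+1) => H.
- rewrite modn_small //.
  by case: j Hj => [|j] Hj /=; apply/eqP/eqP; lia.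
- lia.
- rewrite H modnn.
  by case: j Hj => [|j] Hj /=; apply/eqP/eqP; lia.
Qed.

Definition Sc r j n := \sum_(0 <= x < n.+1) (x %% r == j) * Wc r n x.
Definition Tc r n := \sum_(0 <= x < n.+1) Wc r n x.

Lemma sum_Wc_step r (c : nat -> nat) n :
  \sum_(0 <= x < n.+2) c x * Wc r n.+1 x =
  \sum_(0 <= y < n.+1) c y.+1 * Wc r n y +
  \sum_(0 <= x < n.+1) c x * (~~ (r %| x)) * Wc r n x.
Proof.
rewrite (eq_bigr (fun x => c x * (if x is x'.+1 then Wc r n x' else 0) +
                            c x * (~~ (r %| x)) * Wc r n x)); last first.
  by move=> x _; rewrite /= mulnDr mulnA.
rewrite big_split /=; congr addn.
  by rewrite big_nat_recl //= muln0 add0n.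
by rewrite big_nat_recr //= Wc_gt // muln0 addn0.
Qed.

Lemma split_S0 r n :
  \sum_(0 <= x < n.+1) (~~ (r %| x)) * Wc r n x + Sc r 0 n = Tc r n.
Proof.
rewrite /Sc /Tc -big_split /=; apply: eq_bigr => x _.
by rewrite -mulnDl /dvdn; case: (x %% r == 0); rewrite mul1n.
Qed.

Lemma g_ST r M : g r M + Sc r 0 M = Tc r M.
Proof. by rewrite g_formula split_S0. Qed.

Lemma T_step r n : Tc r n.+1 + Sc r 0 n = 2 * Tc r n.
Proof.
have := sum_Wc_step r (fun _ => 1) n.
rewrite /Tc !(eq_bigr _ (fun x _ => mul1n _)) => ->.
under [X in _ + X + _]eq_bigr do rewrite mul1n.
by rewrite -addnA split_S0 /Tc; lia.
Qed.

Lemma S_step r j n : 0 < r -> 0 < j < r -> Sc r j n.+1 = Sc r j.-1 n + Sc r j n.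
Proof.
move=> r0 /andP[j0 jr].
rewrite /Sc sum_Wc_step; congr addn.
  apply: eq_bigr => y _; rewrite modS_eq //.
  by case: j j0 jr.
apply: eq_bigr => x _; congr muln.
rewrite /dvdn; case: eqP => [->|_] //.
by case: j j0 jr.
Qed.

Lemma S0_step r n : 0 < r -> Sc r 0 n.+1 = Sc r r.-1 n.
Proof.
move=> r0; rewrite /Sc sum_Wc_step.
rewrite [X in _ + X]big1 ?addn0; last first.
  by move=> x _; rewrite /dvdn; case: (x %% r == 0).
by apply: eq_bigr => y _; rewrite modS_eq.
Qed.

Lemma S_zero r j : 0 < r -> j < r -> Sc r j 0 = (j == 0).
Proof.
move=> r0 jr; rewrite /Sc big_nat1 /= mod0n muln1.
by case: j jr.
Qed.

Lemma T_zero r : Tc r 0 = 1.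
Proof. by rewrite /Tc big_nat1. Qed.

Import GRing.Theory.
Local Open Scope ring_scope.

Definition ser N (a : nat -> nat) : {poly int} := \poly_(n < N.+1) (a n)%:R.
Definition eqm N (p q : {poly int}) := forall i, (i <= N)%N -> p`_i = q`_i.

Lemma coef_ser N a i : (i <= N)%N -> (ser N a)`_i = (a i)%:R.
Proof. by move=> Hi; rewrite /ser coef_poly ltnS Hi. Qed.

Lemma eqm_trans N (p q s : {poly int}) : eqm N p q -> eqm N q s -> eqm N p s.
Proof. by move=> H1 H2 i Hi; rewrite H1 // H2. Qed.
Lemma eqm_sym N (p q : {poly int}) : eqm N p q -> eqm N q p.
Proof. by move=> H i Hi; rewrite H. Qed.
Lemma eqm_eq N (p q : {poly int}) : p = q -> eqm N p q.
Proof. by move=> ->. Qed.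
Lemma eqmD N (p1 q1 p2 q2 : {poly int}) : eqm N p1 q1 -> eqm N p2 q2 -> eqm N (p1 + p2) (q1 + q2).
Proof. by move=> H1 H2 i Hi; rewrite !coefD H1 // H2. Qed.
Lemma eqmB N (p1 q1 p2 q2 : {poly int}) : eqm N p1 q1 -> eqm N p2 q2 -> eqm N (p1 - p2) (q1 - q2).
Proof. by move=> H1 H2 i Hi; rewrite !coefB H1 // H2. Qed.
Lemma eqmMl N (s p q : {poly int}) : eqm N p q -> eqm N (s * p) (s * q).
Proof.
move=> H i Hi; rewrite !coefM; apply: eq_bigr => j _; rewrite H //.
apply: leq_trans Hi; exact: leq_subr.
Qed.

Lemma S_rel N r j : (0 < r)%N -> (0 < j < r)%N ->
  eqm N ((1 - 'X) * ser N (Sc r j)) ('X * ser N (Sc r j.-1)).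
Proof.
move=> r0 /andP[j0 jr] i Hi.
rewrite mulrBl mul1r coefB !coefXM.
case: i Hi => [|i] Hi /=.
  by rewrite (coef_ser _ Hi) S_zero //; case: j j0 jr.
rewrite !(coef_ser _ Hi) !(coef_ser _ (ltnW Hi)).
by rewrite S_step ?j0 // natrD addrK.
Qed.

Lemma S0_rel N r : (0 < r)%N ->
  eqm N (ser N (Sc r 0)) (1 + 'X * ser N (Sc r r.-1)).
Proof.
move=> r0 i Hi.
rewrite coefD coef1 coefXM.
case: i Hi => [|i] Hi /=.
  by rewrite (coef_ser _ Hi) S_zero // addr0.
by rewrite (coef_ser _ Hi) (coef_ser _ (ltnW Hi)) add0r S0_step.
Qed.

Lemma T_rel N r : (0 < r)%N ->
  eqm N ((1 - 'X *+ 2) * ser N (Tc r)) (1 - 'X * ser N (Sc r 0)).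
Proof.
move=> r0 i Hi.
rewrite mulrBl mul1r mulrnAl coefB coefMn coefB coef1 !coefXM.
case: i Hi => [|i] Hi /=.
  by rewrite (coef_ser _ Hi) T_zero !subr0.
rewrite !(coef_ser _ Hi) !(coef_ser _ (ltnW Hi)).
have := congr1 (fun n : nat => n%:R : int) (T_step r i).
rewrite /= natrD natrM => H.
rewrite mulr2n; lra.
Qed.

Lemma sum_pick_R (F : nat -> int) m n k : (m <= k < n)%N ->
  \sum_(m <= M < n) F M * (k == M)%:R = F k.
Proof.
move=> /andP[mk kn].
rewrite (big_cat_nat mk (ltnW kn)) /= [X in _ + X]big_ltn //= eqxx mulr1.
rewrite big1_seq ?add0r; last first.
  move=> M; rewrite mem_index_iota => /andP[_ HM].
  have -> : (k == M) = false by apply/negbTE/eqP; lia.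
  by rewrite mulr0.
rewrite big1_seq ?addr0 //.
move=> M; rewrite mem_index_iota => /andP[_ HM].
have -> : (k == M) = false by apply/negbTE/eqP; lia.
by rewrite mulr0.
Qed.

Lemma g0 r : g r 0 = 0%N.
Proof. by rewrite g_formula big_nat1 dvdn0. Qed.

Lemma coef_gser r N i : (i <= N)%N -> (gser r N)`_i = (g r i)%:R.
Proof.
move=> Hi; rewrite /gser coef_sum.
rewrite (eq_bigr (fun M => (g r M)%:R * (i == M)%:R)); last first.
  by move=> M _; rewrite coefZ coefXn eq_sym.
case: i Hi => [|i] Hi.
  rewrite g0 big1_seq //.
  move=> M; rewrite mem_index_iota => /andP[_ HM].
  have -> : (0 == M) = false by apply/negbTE/eqP; lia.
  by rewrite mulr0.
by rewrite sum_pick_R //; lia.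
Qed.

Lemma G_rel N r : eqm N (gser r N) (ser N (Tc r) - ser N (Sc r 0)).
Proof.
move=> i Hi; rewrite coefB coef_gser // !coef_ser //.
have := congr1 (fun n : nat => n%:R : int) (g_ST r i).
rewrite /= natrD => H; lra.
Qed.

Lemma eqmMr N (s p q : {poly int}) : eqm N p q -> eqm N (p * s) (q * s).
Proof. by move=> H; rewrite ![_ * s]mulrC; apply: eqmMl. Qed.

Lemma chain N r j : (2 <= r)%N -> (j <= r.-1)%N ->
  eqm N ((1 - 'X) ^+ j * ser N (Sc r j)) ('X ^+ j * ser N (Sc r 0)).
Proof.
move=> r2; elim: j => [|j IH] Hj.
  by apply: eqm_eq; rewrite !expr0 !mul1r.
apply: (@eqm_trans _ _ ((1 - 'X) ^+ j * ((1 - 'X) * ser N (Sc r j.+1)))).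
  by apply: eqm_eq; rewrite exprSr mulrA.
apply: eqm_trans; first apply: eqmMl; first (apply: S_rel; lia).
apply: (@eqm_trans _ _ ('X * ((1 - 'X) ^+ j * ser N (Sc r j)))).
  by apply: eqm_eq; rewrite /= mulrCA.
apply: eqm_trans; first (apply: eqmMl; apply: IH; lia).
by apply: eqm_eq; rewrite exprS mulrA.
Qed.

Lemma D_rel N r : (2 <= r)%N ->
  eqm N (((1 - 'X) ^+ (r - 1) - 'X ^+ r) * ser N (Sc r 0)) ((1 - 'X) ^+ (r - 1)).
Proof.
move=> r2; rewrite subn1.
set A := (1 - 'X) ^+ r.-1.
rewrite mulrBl.
apply: (@eqm_trans _ _ ((A + 'X ^+ r * ser N (Sc r 0)) - 'X ^+ r * ser N (Sc r 0))); last first.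
  by apply: eqm_eq; rewrite addrK.
apply: eqmB; last exact: eqm_eq.
apply: eqm_trans; first (apply: eqmMl; apply: S0_rel; lia).
apply: (@eqm_trans _ _ (A + 'X * (A * ser N (Sc r r.-1)))).
  by apply: eqm_eq; rewrite mulrDr mulr1 mulrCA.
apply: eqmD; first exact: eqm_eq.
apply: eqm_trans; first (apply: eqmMl; apply: chain; lia).
apply: eqm_eq; rewrite mulrA -exprS.
by case: r r2 {A}.
Qed.

Theorem mainTheorem13 (r : nat) (hr : (2 <= r)%N) (N i : nat) (hi : (i <= N)%N) :
  (gser r N * ((1 - 'X *+ 2) * ((1 - 'X) ^+ (r - 1) - 'X ^+ r)))`_i
  = ('X * ((1 - 'X) ^+ (r - 1) - 'X ^+ (r - 1)) : {poly int})`_i.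
Proof.
have r0 : (0 < r)%N by lia.
move: i hi; rewrite -/(eqm N _ _).
set T := ser N (Tc r); set S0 := ser N (Sc r 0).
apply: (@eqm_trans _ _ ((T - S0) * ((1 - 'X *+ 2) * ((1 - 'X) ^+ (r - 1) - 'X ^+ r)))); first by apply: eqmMr; exact: G_rel.
apply: (@eqm_trans _ _ (((1 - 'X *+ 2) * T) * ((1 - 'X) ^+ (r - 1) - 'X ^+ r) - (1 - 'X *+ 2) * (((1 - 'X) ^+ (r - 1) - 'X ^+ r) * S0))).
  by apply: eqm_eq; ring.
apply: (@eqm_trans _ _ ((1 - 'X * S0) * ((1 - 'X) ^+ (r - 1) - 'X ^+ r) - (1 - 'X *+ 2) * (1 - 'X) ^+ (r - 1))).
  apply: eqmB; first by apply: eqmMr; exact: T_rel.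
  by apply: eqmMl; exact: D_rel.
apply: (@eqm_trans _ _ (((1 - 'X) ^+ (r - 1) - 'X ^+ r) - 'X * (((1 - 'X) ^+ (r - 1) - 'X ^+ r) * S0) - (1 - 'X *+ 2) * (1 - 'X) ^+ (r - 1))).
  by apply: eqm_eq; ring.
apply: (@eqm_trans _ _ (((1 - 'X) ^+ (r - 1) - 'X ^+ r) - 'X * (1 - 'X) ^+ (r - 1) - (1 - 'X *+ 2) * (1 - 'X) ^+ (r - 1))).
  apply: eqmB; last exact: eqm_eq.
  apply: eqmB; first exact: eqm_eq.
  by apply: eqmMl; exact: D_rel.
apply: eqm_eq.
have -> : 'X ^+ r = 'X * 'X ^+ (r - 1) :> {poly int} by rewrite -exprS subn1 prednK.
ring.
Qed.
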